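(* Let $G$ be a subdivided $\Pi$-graph. Then every grain line $(L,\mathcal P)$ in $G$ is wild, i.e. $(L,\le_L)$ is order-isomorphic to $\mathbb{Q}\cap[0,1]$. In particular, in a subdivided $\Pi$-graph, every grain line can be chosen to be wildly presented: whenever $(L,(P_n)_{n\in\mathbb{N}})$ is an $x$–$y$ grain line in $G$, there is a subsequence $(P_{n_k})_{k\in\mathbb{N}}$ such that $(L,(P_{n_k})_{k\in\mathbb{N}})$ is a wildly presented $x$–$y$ grain line in $G$.
   Context: Graphs are simple and may be infinite; $\mathbb{N}=\{0,1,2,\dots\}$. A graph is infinitely edge-connected if it has at least two vertices and $G-E'$ is connected for every finite edge set $E'$. A $\Pi$-graph is an infinitely edge-connected graph that does not contain infinitely many internally vertex-disjoint paths between any two of its vertices. A subdivided $\Pi$-graph is a graph that is a subdivision of some $\Pi$-graph (each edge replaced by a path, new inner vertices added). An $x$–$y$ path $P$ induces the linear order $\le_P$ of traversal from $x$ to $y$ on $V(P)$. For distinct vertices $x,y$, an $x$–$y$ grain line in $G$ is a pair $(L,\mathcal P)$ where $L\subseteq V(G)$ is a countable set with a linear order $\le_L$ having least element $x$ and greatest element $y$, and $\mathcal P=(P_n)_{n\in\mathbb{N}}$ is a sequence of pairwise edge-disjoint $x$–$y$ paths in $G$, such that: (GL1) $L$ is exactly the set of vertices $v$ for which $\{n: v\in V(P_n)\}$ is a non-empty final segment $\{n:n\ge m\}$ of $\mathbb{N}$; (GL2) if a vertex of $P_n$ is not in $L$, it lies on no $P_m$ with $m\ne n$; (GL3) for every $n$,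 $\le_{P_n}$ and $\le_L$ induce the same linear order on $L_{<n}:=L\cap\bigcup_{k<n}V(P_k)$. A grain line is wild if $(L,\le_L)$ is order-isomorphic to $\mathbb{Q}\cap[0,1]$. It is wildly presented if for every $n$ and all $\ell_1<_L\ell_2$ in $L_{<n}$, the subpath $\ell_1P_n\ell_2$ of $P_n$ has a vertex in the open interval $(\ell_1,\ell_2)_L=\{\ell\in L:\ell_1<_L\ell<_L\ell_2\}$. *)

(* Defs.v *)
From HB Require Import structures.
From mathcomp Require Import all_boot all_order all_algebra.
From Stdlib Require List.
Set Implicit Arguments. Unset Strict Implicit. Unset Printing Implicit Defensive.
Import Order.TTheory GRing.Theory Num.Theory.

Record graph := Graph {
  vert :> Type;
  adj : vert -> vert -> Prop;
  adj_sym : forall u v, adj u v -> adj v u;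
  adj_irrefl : forall u, ~ adj u u }.

Section Paths.
Variable G : graph.

Definition pedge (P : list G) (a b : G) : Prop :=
  exists i, List.nth_error P i = Some a /\ List.nth_error P (S i) = Some b.

Definition is_path (P : list G) : Prop :=
  P <> nil /\ List.NoDup P /\ forall a b, pedge P a b -> adj a b.

Definition xy_path (x y : G) (P : list G) : Prop :=
  is_path P /\ List.nth_error P 0 = Some x
  /\ List.nth_error P (length P - 1) = Some y.

Definition path_le (P : list G) (u w : G) : Prop :=
  exists i j, (i <= j)%N /\ List.nth_error P i = Some u /\ List.nth_error P j = Some w.

Definition inner (x y : G) (P : list G) (z : G) : Prop :=
  List.In z P /\ z <> x /\ z <> y.

Definition avoids (E : list (G * G)) (P : list G) : Prop :=
  forall a b, pedge P a b -> ~ List.In (a, b) E /\ ~ List.In (b, a) E.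

Definition edge_disjoint (P Q : list G) : Prop :=
  forall a b, pedge P a b -> ~ pedge Q a b /\ ~ pedge Q b a.

Definition inf_edge_connected : Prop :=
  (exists u v : G, u <> v) /\
  forall (E : list (G * G)) (u v : G), exists P, xy_path u v P /\ avoids E P.

Definition inf_indep_paths (x y : G) : Prop :=
  exists Q : nat -> list G,
    (forall i, xy_path x y (Q i)) /\
    (forall i j, i <> j -> Q i <> Q j) /\
    (forall i j z, i <> j -> inner x y (Q i) z -> ~ List.In z (Q j)).

Definition Pi_graph : Prop :=
  inf_edge_connected /\ forall x y : G, x <> y -> ~ inf_indep_paths x y.

End Paths.

(* G is a subdivision of H: branch vertices f, and every edge uv of H is
   replaced by an f u – f v path R u v; these paths have inner vertices
   outside the branch set, pairwise disjoint interiors, and together they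
   make up all of G (vertices and edges). *)
Definition subdivision_of (G H : graph) : Prop :=
  exists (f : H -> G) (R : H -> H -> list G),
    (forall u v, f u = f v -> u = v) /\
    (forall u v, adj u v -> xy_path (f u) (f v) (R u v)) /\
    (forall u v, adj u v -> R v u = List.rev (R u v)) /\
    (forall u v z w, adj u v -> inner (f u) (f v) (R u v) z -> z <> f w) /\
    (forall u v u' v' z, adj u v -> adj u' v' ->
        inner (f u) (f v) (R u v) z -> inner (f u') (f v') (R u' v') z ->
        (u' = u /\ v' = v) \/ (u' = v /\ v' = u)) /\
    (forall z : G, (exists w, z = f w) \/
        exists u v, adj u v /\ inner (f u) (f v) (R u v) z) /\
    (forall a b : G, adj a b -> exists u v, adj u v /\ pedge (R u v) a b).

Definition subdivided_Pi_graph (G : graph) : Prop :=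
  exists H : graph, Pi_graph H /\ subdivision_of G H.

Section GrainLines.
Variable G : graph.

Definition L_lt (L : G -> Prop) (P : nat -> list G) (n : nat) (v : G) : Prop :=
  L v /\ exists k, (k < n)%N /\ List.In v (P k).

Definition grain_line (x y : G) (L : G -> Prop) (le : G -> G -> Prop)
    (P : nat -> list G) : Prop :=
  x <> y /\
  (exists g : G -> nat, forall u v, L u -> L v -> g u = g v -> u = v) /\
  (forall u, L u -> le u u) /\
  (forall u v, L u -> L v -> le u v -> le v u -> u = v) /\
  (forall u v w, L u -> L v -> L w -> le u v -> le v w -> le u w) /\
  (forall u v, L u -> L v -> le u v \/ le v u) /\
  L x /\ L y /\ (forall v, L v -> le x v /\ le v y) /\
  (forall n, xy_path x y (P n)) /\
  (forall n m, n <> m -> edge_disjoint (P n) (P m)) /\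
  (forall v, L v <-> exists m, forall n, List.In v (P n) <-> (m <= n)%N) /\
  (forall n v, List.In v (P n) -> ~ L v -> forall m, m <> n -> ~ List.In v (P m)) /\
  (forall n u w, L_lt L P n u -> L_lt L P n w -> (le u w <-> path_le (P n) u w)).

Definition wild (L : G -> Prop) (le : G -> G -> Prop) : Prop :=
  exists f : G -> rat,
    (forall v, L v -> (0 <= f v)%R /\ (f v <= 1)%R) /\
    (forall q : rat, (0 <= q)%R -> (q <= 1)%R -> exists v, L v /\ f v = q) /\
    (forall u w, L u -> L w -> (le u w <-> (f u <= f w)%R)).

Definition wildly_presented (L : G -> Prop) (le : G -> G -> Prop)
    (P : nat -> list G) : Prop :=
  forall n l1 l2, L_lt L P n l1 -> L_lt L P n l2 -> le l1 l2 -> l1 <> l2 ->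
    exists l, path_le (P n) l1 l /\ path_le (P n) l l2 /\
              L l /\ le l1 l /\ l1 <> l /\ le l l2 /\ l <> l2.

End GrainLines.

(* Main.v *)
Require Import Defs.
From mathcomp Require Import all_boot all_order all_algebra zify.
From Stdlib Require Import Lia Classical ClassicalEpsilon.
Require Import Defs.
Set Implicit Arguments. Unset Strict Implicit. Unset Printing Implicit Defensive.
Import Order.TTheory GRing.Theory Num.Theory.
Notation "a +++ b" := (List.app a b) (at level 60, right associativity).

Definition linord (T:Type) (LT : T -> Prop) (le : T -> T -> Prop) :=
  (forall u, LT u -> le u u) /\
  (forall u v, LT u -> LT v -> le u v -> le v u -> u = v) /\
  (forall u v w, LT u -> LT v -> LT w -> le u v -> le v w -> le u w) /\
  (forall u v, LT u -> LT v -> le u v \/ le v u).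

Definition dense (T:Type) (LT : T -> Prop) (le : T -> T -> Prop) :=
  forall a b, LT a -> LT b -> le a b -> a <> b ->
    exists c, LT c /\ le a c /\ a <> c /\ le c b /\ c <> b.

Lemma linord_flip (T:Type) (LT : T -> Prop) (le : T -> T -> Prop) :
  linord LT le -> linord LT (fun u v => le v u).
Proof.
move=> [h1 [h2 [h3 h4]]]; split; [exact: h1|split; [|split]].
- move=> u v Hu Hv a b; exact: (h2 u v Hu Hv b a).
- move=> u v w Hu Hv Hw a b; exact: (h3 w v u Hw Hv Hu b a).
- move=> u v Hu Hv; case: (h4 u v Hu Hv); auto.
Qed.

Lemma list_max (X T : Type) (k : X -> T) (LT : T -> Prop) (le : T -> T -> Prop)
  (lin : linord LT le) (Q : X -> Prop) (l : list X) :
  (forall t, List.In t l -> Q t -> LT (k t)) ->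
  (exists t, List.In t l /\ Q t) ->
  exists m, List.In m l /\ Q m /\ forall t, List.In t l -> Q t -> le (k t) (k m).
Proof.
case: lin => [h1 [h2 [h3 h4]]].
elim: l => [|a l IH] HL [t [Ht HQ]]; first by case: Ht.
case: (classic (exists t, List.In t l /\ Q t)) => [Ex|NEx].
- have HL' : forall t, List.In t l -> Q t -> LT (k t) by move=> t0 H0; apply: HL; right.
  case: (IH HL' Ex) => m [Hm [HQm Hmax]].
  case: (classic (Q a)) => HQa.
  + have LTa : LT (k a) by apply: HL; [left|].
    have LTm : LT (k m) by apply: HL; [right|].
    case: (h4 _ _ LTa LTm) => Hc.
    * exists m; split; [right|split] => //.
      move=> t0 [<-|H0] H1 //; auto.
    * exists a; split; [left|split] => //.
      move=> t0 [<-|H0] H1; first by auto.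
      apply: (h3 _ (k m)) => //; [by apply: HL; [right|] | auto].
  + exists m; split; [right|split] => //.
    move=> t0 [<-|H0] H1 //; auto.
- case: Ht => [Ha|Ht]; last by (exfalso; apply: NEx; exists t).
  subst t; exists a; split; [left|split] => //.
  move=> t0 [<-|H0] H1; first by (apply: h1; apply: HL; [left|]).
  exfalso; apply: NEx; exists t0; auto.
Qed.

Definition PI (A B : Type) (LA : A -> Prop) (leA : A -> A -> Prop)
  (LB : B -> Prop) (leB : B -> B -> Prop) (s : list (A * B)) :=
  (forall p, List.In p s -> LA p.1 /\ LB p.2) /\
  (forall p q, List.In p s -> List.In q s -> (leA p.1 q.1 <-> leB p.2 q.2)).

Section Ext.
Variables (A B : Type) (LA : A -> Prop) (leA : A -> A -> Prop)
  (LB : B -> Prop) (leB : B -> B -> Prop).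
Hypotheses (linA : linord LA leA) (linB : linord LB leB) (dB : dense LB leB).
Variables (xa ya : A) (xb yb : B).
Hypotheses (exa : forall a, LA a -> leA xa a /\ leA a ya).

Lemma extend s a : PI LA leA LB leB s -> List.In (xa, xb) s -> List.In (ya, yb) s ->
  LA a -> exists b, PI LA leA LB leB ((a, b) :: s).
Proof.
move=> [HS1 HS2] Hx Hy Ha.
case: (classic (exists b, List.In (a, b) s)) => [[b Hb]|Nb].
  exists b; split.
  - move=> p [<-|Hp]; [exact: HS1 | exact: HS1].
  - move=> p q Hp Hq; apply: HS2; [case: Hp => [<-|]|case: Hq => [<-|]] => //.
case: linA => [a1 [a2 [a3 a4]]]; case: linB => [b1 [b2 [b3 b4]]].
have neq : forall p, List.In p s -> p.1 <> a.
  move=> [p1 p2] Hp /= E; subst p1; apply: Nb; by exists p2.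
have [plo [Hplo [Qlo Mlo]]] := list_max (k := snd) linB (Q := fun p => leA p.1 a)
   (fun t Ht _ => proj2 (HS1 t Ht)) (ex_intro _ _ (conj Hx (proj1 (exa Ha)))).
have [phi [Hphi [Qhi Mhi]]] := list_max (k := snd) (linord_flip linB) (Q := fun p => leA a p.1)
   (fun t Ht _ => proj2 (HS1 t Ht)) (ex_intro _ _ (conj Hy (proj2 (exa Ha)))).
have [LAlo LBlo] := HS1 _ Hplo.
have [LAhi LBhi] := HS1 _ Hphi.
have Hlohi : leA plo.1 phi.1 by apply: (a3 _ a).
have Nlohi : plo.1 <> phi.1.
  move=> E; apply: (neq _ Hplo); apply: a2 => //; by rewrite E.
have Blohi : leB plo.2 phi.2 by apply/(HS2 _ _ Hplo Hphi).
have NBlohi : plo.2 <> phi.2.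
  move=> E; apply: Nlohi; apply: a2 => //; apply/(HS2 _ _ Hphi Hplo); rewrite E; exact: b1.
have [c [LBc [Hc1 [Hc2 [Hc3 Hc4]]]]] := dB LBlo LBhi Blohi NBlohi.
have key : forall p, List.In p s -> (leA a p.1 <-> leB c p.2) /\ (leA p.1 a <-> leB p.2 c).
  move=> p Hp; have [LAp LBp] := HS1 _ Hp.
  case: (a4 _ _ LAp Ha) => Hpa.
  - have Hp2 : leB p.2 plo.2 by exact: Mlo.
    have Hpc : leB p.2 c by apply: (b3 _ plo.2).
    split; split => // H.
    + exfalso; apply: (neq _ Hp); exact: a2.
    + exfalso; apply: Hc2; apply: b2 => //; apply: (b3 _ p.2) => //.
  - have Hp2 : leB phi.2 p.2 by exact: Mhi.
    have Hpc : leB c p.2 by apply: (b3 _ phi.2).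
    split; split => // H.
    + exfalso; apply: (neq _ Hp); exact: a2.
    + exfalso; apply: Hc4; apply: b2 => //; apply: (b3 _ p.2) => //.
exists c; split.
- move=> p [<-|Hp]; [by split | exact: HS1].
- move=> p q [<-|Hp] [<-|Hq] /=.
  + split=> _; [exact: b1 | exact: a1].
  + exact: (proj1 (key _ Hq)).
  + exact: (proj2 (key _ Hp)).
  + exact: HS2.
Qed.
End Ext.

Definition swap (A B : Type) (s : list (A * B)) : list (B * A) :=
  List.map (fun p => (p.2, p.1)) s.

Lemma swap_swap (A B : Type) (s : list (A * B)) : swap (swap s) = s.
Proof. rewrite /swap List.map_map; elim: s => [|[a b] s IH] //=; by rewrite IH. Qed.

Lemma PI_swap (A B : Type) (LA : A -> Prop) (leA : A -> A -> Prop)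
  (LB : B -> Prop) (leB : B -> B -> Prop) s :
  PI LA leA LB leB s -> PI LB leB LA leA (swap s).
Proof.
move=> [H1 H2]; split.
- move=> q /List.in_map_iff [p [<- Hp]] /=; have [? ?] := H1 _ Hp; by split.
- move=> q r /List.in_map_iff [p [<- Hp]] /List.in_map_iff [p' [<- Hp']] /=.
  by rewrite (H2 _ _ Hp Hp').
Qed.

Lemma In_swap (A B : Type) (s : list (A * B)) a b :
  List.In (a, b) s -> List.In (b, a) (swap s).
Proof. move=> H; apply/List.in_map_iff; by exists (a, b). Qed.

Section Cantor.
Variables (A B : Type) (LA : A -> Prop) (leA : A -> A -> Prop)
  (LB : B -> Prop) (leB : B -> B -> Prop).
Hypotheses (linA : linord LA leA) (linB : linord LB leB)
  (dA : dense LA leA) (dB : dense LB leB).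
Variables (xa ya : A) (xb yb : B).
Hypotheses (LAx : LA xa) (LAy : LA ya) (LBx : LB xb) (LBy : LB yb).
Hypotheses (exa : forall a, LA a -> leA xa a /\ leA a ya)
  (exb : forall b, LB b -> leB xb b /\ leB b yb).
Hypotheses (nxa : xa <> ya) (nxb : xb <> yb).
Variables (gA : A -> nat) (gB : B -> nat).
Hypotheses (gAi : forall u v, LA u -> LA v -> gA u = gA v -> u = v)
  (gBi : forall u v, LB u -> LB v -> gB u = gB v -> u = v).

Definition good s := PI LA leA LB leB s /\ List.In (xa, xb) s /\ List.In (ya, yb) s.

Lemma good_ext_l s a : good s -> LA a -> exists b, good ((a, b) :: s).
Proof.
move=> [H1 [H2 H3]] Ha.
have [b Hb] := extend linA linB dB exa H1 H2 H3 Ha.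
exists b; split => //; split; by right.
Qed.

Lemma good_ext_r s b : good s -> LB b -> exists a, good ((a, b) :: s).
Proof.
move=> [H1 [H2 H3]] Hb.
have [a Ha] := extend linB linA dA exb (PI_swap H1) (In_swap H2) (In_swap H3) Hb.
exists a; split; last (split; by right).
have := PI_swap Ha; by rewrite /= swap_swap.
Qed.

Definition enum_of (T : Type) (LT : T -> Prop) (g : T -> nat) (n : nat) : option T :=
  match excluded_middle_informative (exists a, LT a /\ g a = n) with
  | left h => Some (proj1_sig (constructive_indefinite_description _ h))
  | right _ => None
  end.

Lemma enum_of_spec1 (T : Type) (LT : T -> Prop) (g : T -> nat) n a :
  enum_of LT g n = Some a -> LT a.
Proof.
rewrite /enum_of; case: excluded_middle_informative => // h [<-].
by case: (constructive_indefinite_description _ h) => b [].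
Qed.

Lemma enum_of_spec2 (T : Type) (LT : T -> Prop) (g : T -> nat)
  (gi : forall u v, LT u -> LT v -> g u = g v -> u = v) a :
  LT a -> enum_of LT g (g a) = Some a.
Proof.
move=> Ha; rewrite /enum_of; case: excluded_middle_informative => [h|h].
- case: (constructive_indefinite_description _ h) => b [Hb E] /=.
  by rewrite (gi _ _ Hb Ha E).
- exfalso; apply: h; by exists a.
Qed.

Lemma step_ex s n : exists s', good s -> good s' /\ List.incl s s' /\
  (forall a, LA a -> gA a = n -> exists b, List.In (a, b) s') /\
  (forall b, LB b -> gB b = n -> exists a, List.In (a, b) s').
Proof.
case: (classic (good s)) => Hg; last by exists s.
have [s1 [G1 [I1 P1]]] : exists s1, good s1 /\ List.incl s s1 /\
   (forall a, LA a -> gA a = n -> exists b, List.In (a, b) s1).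
  case E: (enum_of LA gA n) => [a|].
  - have Ha := enum_of_spec1 E.
    have [b Hb] := good_ext_l Hg Ha.
    exists ((a, b) :: s); split => //; split; first by move=> p Hp; right.
    move=> a' Ha' Hn; subst n; rewrite (enum_of_spec2 gAi Ha') in E; case: E => ->.
    exists b; by left.
  - exists s; split => //; split => //.
    move=> a' Ha' Hn; subst n; by rewrite (enum_of_spec2 gAi Ha') in E.
case E: (enum_of LB gB n) => [b|].
- have Hb := enum_of_spec1 E.
  have [a Ha] := good_ext_r G1 Hb.
  exists ((a, b) :: s1) => _; split => //; split.
    move=> p Hp; right; exact: I1.
  split.
  + move=> a' Ha' Hn; have [b' Hb'] := P1 _ Ha' Hn; exists b'; by right.
  + move=> b' Hb' Hn; subst n; rewrite (enum_of_spec2 gBi Hb') in E; case: E => ->.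
    exists a; by left.
- exists s1 => _; split => //; split => //; split => //.
  move=> b' Hb' Hn; subst n; by rewrite (enum_of_spec2 gBi Hb') in E.
Qed.

Definition stepf s n := proj1_sig (constructive_indefinite_description _ (step_ex s n)).

Lemma stepf_spec s n : good s -> good (stepf s n) /\ List.incl s (stepf s n) /\
  (forall a, LA a -> gA a = n -> exists b, List.In (a, b) (stepf s n)) /\
  (forall b, LB b -> gB b = n -> exists a, List.In (a, b) (stepf s n)).
Proof. rewrite /stepf; case: constructive_indefinite_description => s' H /=; exact: H. Qed.

Fixpoint seqs (n : nat) : list (A * B) :=
  match n with 0 => [:: (xa, xb); (ya, yb)] | S n => stepf (seqs n) n end.

Lemma seqs_good n : good (seqs n).
Proof.
elim: n => [|n IH] /=.
- split; last by split; [left|right; left].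
  split.
  + move=> p [<-|[<-|[]]] /=; by split.
  + have [a1 [a2 [a3 a4]]] := linA; have [b1 [b2 [b3 b4]]] := linB.
    move=> p q [<-|[<-|[]]] [<-|[<-|[]]] /=.
    * split=> _; auto.
    * split=> _; [exact: (proj1 (exb LBy))|exact: (proj1 (exa LAy))].
    * split=> H; exfalso.
      -- apply: nxa; apply: a2 => //; exact: (proj1 (exa LAy)).
      -- apply: nxb; apply: b2 => //; exact: (proj1 (exb LBy)).
    * split=> _; auto.
- exact: (proj1 (stepf_spec n IH)).
Qed.

Lemma seqs_incl n m : (n <= m)%N -> List.incl (seqs n) (seqs m).
Proof.
move=> /ssrnat.leP; elim => [|m' _ IH]; first by move=> p.
move=> p Hp /=; apply: (proj1 (proj2 (stepf_spec m' (seqs_good m')))); exact: IH.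
Qed.

Lemma seqs_cov_l a : LA a -> exists n b, List.In (a, b) (seqs n).
Proof.
move=> Ha; exists (gA a).+1; exact: (proj1 (proj2 (proj2 (stepf_spec (gA a) (seqs_good _)))) a Ha erefl).
Qed.

Lemma seqs_cov_r b : LB b -> exists n a, List.In (a, b) (seqs n).
Proof.
move=> Hb; exists (gB b).+1; exact: (proj2 (proj2 (proj2 (stepf_spec (gB b) (seqs_good _)))) b Hb erefl).
Qed.

Lemma seqs_PI n m p q : List.In p (seqs n) -> List.In q (seqs m) ->
  LA p.1 /\ LB p.2 /\ (leA p.1 q.1 <-> leB p.2 q.2).
Proof.
move=> Hp Hq.
have Hp' : List.In p (seqs (maxn n m)) by apply: (seqs_incl (leq_maxl n m)).
have Hq' : List.In q (seqs (maxn n m)) by apply: (seqs_incl (leq_maxr n m)).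
have [[H1 H2] _] := seqs_good (maxn n m).
have [? ?] := H1 _ Hp'; split => //; split => //; exact: H2.
Qed.

Definition fmap (a : A) : B :=
  match excluded_middle_informative (exists b n, List.In (a, b) (seqs n)) with
  | left h => proj1_sig (constructive_indefinite_description _ h)
  | right _ => xb
  end.

Lemma fmap_spec a : LA a -> exists n, List.In (a, fmap a) (seqs n).
Proof.
move=> Ha; rewrite /fmap; case: excluded_middle_informative => [h|h].
- by case: (constructive_indefinite_description _ h).
- exfalso; apply: h; have [n [b Hb]] := seqs_cov_l Ha; by exists b, n.
Qed.

Theorem cantor_iso : exists f : A -> B,
  (forall a, LA a -> LB (f a)) /\
  (forall b, LB b -> exists a, LA a /\ f a = b) /\
  (forall u w, LA u -> LA w -> (leA u w <-> leB (f u) (f w))).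
Proof.
exists fmap; split; [|split].
- move=> a Ha; have [n Hn] := fmap_spec Ha.
  exact: (proj1 (proj2 (seqs_PI Hn Hn))).
- move=> b Hb; have [n [a Hab]] := seqs_cov_r Hb.
  have Ha := proj1 (seqs_PI Hab Hab).
  have [m Hm] := fmap_spec Ha.
  exists a; split => //.
  have [b1 [b2 [b3 b4]]] := linB; have [a1 _] := linA.
  have [_ [LBf E1]] := seqs_PI Hm Hab.
  have [_ [_ E2]] := seqs_PI Hab Hm.
  apply: b2 => //=; [exact: (proj1 E1 (a1 a Ha)) | exact: (proj1 E2 (a1 a Ha))].
- move=> u w Hu Hw.
  have [n Hn] := fmap_spec Hu; have [m Hm] := fmap_spec Hw.
  exact: (proj2 (proj2 (seqs_PI Hn Hm))).
Qed.
End Cantor.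

Section ListLemmas.
Variable G : graph.
Implicit Types (l X Y Z : list G) (u v w a b : G).

Lemma nth_error_mid (T : Type) (X Y : list T) (a : T) :
  List.nth_error (X +++ a :: Y) (length X) = Some a.
Proof. by elim: X. Qed.

Lemma nth_error_len (T : Type) (X Y : list T) k :
  List.nth_error (X +++ Y) (length X + k) = List.nth_error Y k.
Proof. elim: X => //= a X IH; by rewrite addSn. Qed.

Lemma pedge_split l u v : pedge l u v <-> exists X Y, l = X +++ u :: v :: Y.
Proof.
split.
- move=> [i [h1 h2]].
  have [X [Z [E HX]]] := List.nth_error_split l i h1.
  subst l; move: h2; rewrite -HX.
  have -> : (length X).+1 = length X + 1 by lia.
  rewrite nth_error_len; clear h1.
  case: Z => [|z Z] //= [->]; by exists X, Z.
- move=> [X [Y ->]]; exists (length X); split; first exact: nth_error_mid.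
  have -> : (length X).+1 = length X + 1 by lia.
  by rewrite nth_error_len.
Qed.

Lemma pedge_In l u v : pedge l u v -> List.In u l /\ List.In v l.
Proof.
move/pedge_split=> [X [Y ->]]; split; apply: List.in_or_app; right; [left|right;left] => //.
Qed.

Lemma pedge_app l u v X Y : pedge l u v -> pedge (X +++ l +++ Y) u v.
Proof.
move/pedge_split=> [X' [Y' ->]]; apply/pedge_split; exists (X +++ X'), (Y' +++ Y).
by rewrite -!List.app_assoc /=.
Qed.

Lemma pedge_rev l u v : pedge (List.rev l) u v <-> pedge l v u.
Proof.
have H : forall l u v, pedge l v u -> pedge (List.rev l) u v.
  move=> l0 u0 v0 /pedge_split [X [Y ->]]; apply/pedge_split.
  exists (List.rev Y), (List.rev X).
  rewrite List.rev_app_distr /=; by rewrite -!List.app_assoc.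
split; last exact: H.
move=> /H; by rewrite List.rev_involutive.
Qed.

Lemma pedge_cons2 a b l u v :
  pedge (a :: b :: l) u v <-> (u = a /\ v = b) \/ pedge (b :: l) u v.
Proof.
split.
- move=> [[|i] [h1 h2]] /=.
  + by move: h1 h2 => /= [<-] [<-]; left.
  + by right; exists i.
- move=> [[-> ->]|[i h]]; [by exists 0 | by exists i.+1].
Qed.

Lemma pedge_single a u v : ~ pedge [:: a] u v.
Proof. by move=> [[|[|i]] [h1 h2]]. Qed.

Lemma pedge_nil u v : ~ pedge [::] u v.
Proof. by move=> [[|i] [h1 h2]]. Qed.

Lemma head_nth (T : Type) (l : list T) x : List.nth_error l 0 = Some x <-> exists t, l = x :: t.
Proof. split; [case: l => //= a t [->]; by exists t | by move=> [t ->]]. Qed.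

Lemma last_nth (T : Type) (l : list T) y :
  List.nth_error l (length l - 1) = Some y <-> exists h, l = h +++ [:: y].
Proof.
split.
- move=> H; have [X [Z [E HX]]] := List.nth_error_split l _ H.
  have HL : length l = length X + length (y :: Z) by rewrite E List.length_app.
  simpl in HL; have HZ : length Z = 0 by lia.
  clear HL H; case: Z HZ E => // _ ->; by exists X.
- move=> [h ->]; rewrite List.length_app /=.
  have -> : (length h + 1 - 1) = length h by lia.
  exact: nth_error_mid.
Qed.

Lemma NoDup_split_uniq (T : Type) (X Y X' Y' : list T) (a : T) :
  List.NoDup (X +++ a :: Y) -> X +++ a :: Y = X' +++ a :: Y' -> X = X' /\ Y = Y'.
Proof.
elim: X X' => [|x X IH] [|x' X'] /=.
- by move=> _ [->].
- move=> ND [E1 E2]; subst x'; exfalso.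
  move: ND; rewrite E2 => /List.NoDup_cons_iff [H _]; apply: H.
  apply: List.in_or_app; right; by left.
- move=> ND [E1 E2]; subst x; exfalso.
  move: ND => /List.NoDup_cons_iff [H _]; apply: H.
  apply: List.in_or_app; right; by left.
- move=> ND [E1 E2]; subst x'.
  move: ND => /List.NoDup_cons_iff [_ ND].
  have [-> ->] := IH X' ND E2; by [].
Qed.

Lemma path_le_intro X u Y w Z : path_le (X +++ u :: Y +++ w :: Z) u w.
Proof.
exists (length X), (length X + 1 + length Y); split; first by apply/ssrnat.leP; lia.
split; first exact: nth_error_mid.
have -> : length X + 1 + length Y = length X + (length Y).+1 by lia.
rewrite nth_error_len /=; exact: nth_error_mid.
Qed.

Lemma path_le_elim l u w : List.NoDup l -> u <> w -> path_le l u w ->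
  exists X Y Z, l = X +++ u :: Y +++ w :: Z.
Proof.
move=> ND Nuw [i [j [/ssrnat.leP Hij [hi hj]]]].
have [X [Z' [E HX]]] := List.nth_error_split l i hi.
have Hij' : i <> j by move=> E'; subst j; rewrite hi in hj; case: hj.
subst l; move: hj.
have -> : j = length X + (j - i - 1).+1 by lia.
rewrite nth_error_len => /= hj; have [Y [Z [E2 _]]] := List.nth_error_split Z' _ hj.
exists X, Y, Z; by rewrite E2.
Qed.

End ListLemmas.

Definition chain (G : graph) (l : list G) := forall a b, pedge l a b -> adj a b.

Definition fan (G : graph) (l1 l2 : G) (S : nat -> list G) :=
  (forall i, xy_path l1 l2 (S i)) /\
  (forall i j, i <> j -> edge_disjoint (S i) (S j)) /\
  (forall i j v, i <> j -> inner l1 l2 (S i) v -> inner l1 l2 (S j) v -> False).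

Lemma chain_cons (G : graph) (x : G) l : chain (x :: l) -> chain l.
Proof.
move=> H a b [i [h1 h2]]; apply: H; by exists i.+1.
Qed.

Lemma chain_cons2 (G : graph) (x y : G) l : chain (x :: y :: l) <-> adj x y /\ chain (y :: l).
Proof.
split.
- move=> H; split; [apply: H; apply/pedge_cons2; by left | exact: chain_cons H].
- move=> [H1 H2] a b /pedge_cons2 [[-> ->]|]//; exact: H2.
Qed.

Lemma chain_single (G : graph) (x : G) : chain [:: x].
Proof. move=> a b H; exfalso; exact: pedge_single H. Qed.

Lemma second (G : graph) (l1 l2 : G) P : xy_path l1 l2 P -> l1 <> l2 ->
  exists z t, P = l1 :: z :: t.
Proof.
move=> [_ [/head_nth [t ->] Hl]] N.
case: t Hl => [|z t] Hl; last by exists z, t.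
move: Hl => /= [E]; by case: N.
Qed.

Lemma xy_path_rev (G : graph) (l1 l2 : G) P : xy_path l1 l2 P -> xy_path l2 l1 (List.rev P).
Proof.
move=> [[NE [ND Ch]] [/head_nth [t Et] /last_nth [h Eh]]].
split; [split; [|split] | split].
- move=> E; apply: NE; by rewrite -(List.rev_involutive P) E.
- exact: List.NoDup_rev.
- move=> a b /pedge_rev H; apply: adj_sym; exact: Ch.
- apply/head_nth; exists (List.rev h); by rewrite Eh List.rev_app_distr.
- apply/last_nth; exists (List.rev t); by rewrite Et.
Qed.

Lemma fan_rev (G : graph) (l1 l2 : G) S : fan l1 l2 S -> fan l2 l1 (fun i => List.rev (S i)).
Proof.
move=> [H1 [H2 H3]]; split; [|split].
- move=> i; exact: xy_path_rev.
- move=> i j Nij a b /pedge_rev Hab.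
  have [K1 K2] := H2 i j Nij _ _ Hab.
  split; move/pedge_rev; by [].
- move=> i j v Nij [Hi [Hi1 Hi2]] [Hj [Hj1 Hj2]].
  apply: (H3 i j v Nij); split; (try split) => //; exact/List.in_rev.
Qed.

Section Fan.
Variables (G H : graph) (f : H -> G) (R : H -> H -> list G).
Hypotheses (Hfi : forall u v, f u = f v -> u = v)
  (HR : forall u v, adj u v -> xy_path (f u) (f v) (R u v))
  (Hrev : forall u v, adj u v -> R v u = List.rev (R u v))
  (Hinb : forall u v z w, adj u v -> inner (f u) (f v) (R u v) z -> z <> f w)
  (Huq : forall u v u' v' z, adj u v -> adj u' v' ->
        inner (f u) (f v) (R u v) z -> inner (f u') (f v') (R u' v') z ->
        (u' = u /\ v' = v) \/ (u' = v /\ v' = u))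
  (Hcov : forall z : G, (exists w, z = f w) \/
        exists u v, adj u v /\ inner (f u) (f v) (R u v) z)
  (Hedge : forall a b : G, adj a b -> exists u v, adj u v /\ pedge (R u v) a b).

Lemma inR_cases u v z : List.In z (R u v) ->
  z = f u \/ z = f v \/ inner (f u) (f v) (R u v) z.
Proof.
move=> Hz; case: (classic (z = f u)) => [|N1]; first by left.
case: (classic (z = f v)) => [|N2]; first by right; left.
by right; right.
Qed.

Lemma edge_class u v z z' : adj z z' -> adj u v -> inner (f u) (f v) (R u v) z ->
  pedge (R u v) z z' \/ pedge (R u v) z' z.
Proof.
move=> Hzz Huv Hin.
have [u' [v' [Huv' Hp]]] := Hedge Hzz.
have [Iz _] := pedge_In Hp.
have Hin' : inner (f u') (f v') (R u' v') z.
  split => //; split; exact: (Hinb Huv Hin).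
case: (Huq Huv Huv' Hin Hin') => [[E1 E2]|[E1 E2]]; subst u' v'; first by left.
right; move: Hp; rewrite (Hrev Huv); by move/pedge_rev.
Qed.

Lemma edge_class_In u v z z' : adj z z' -> adj u v -> inner (f u) (f v) (R u v) z ->
  List.In z' (R u v).
Proof.
move=> H1 H2 H3; case: (edge_class H1 H2 H3) => /pedge_In [? ?] //.
Qed.

Lemma branch_in u v w : adj u v -> List.In (f w) (R u v) -> w = u \/ w = v.
Proof.
move=> Huv Hw; case: (inR_cases Hw) => [/Hfi|[/Hfi|Hin]]; auto.
exfalso; exact: (Hinb Huv Hin).
Qed.

Lemma adj_of (u v a b : H) : adj u v -> (a = u \/ a = v) -> (b = u \/ b = v) -> a <> b -> adj a b.
Proof.
move=> Huv [->|->] [->|->] N //; exact: adj_sym.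
Qed.

Lemma notbranch_inner z : (forall w, z <> f w) ->
  exists u v, adj u v /\ inner (f u) (f v) (R u v) z.
Proof.
move=> N; case: (Hcov z) => // [[w E]]; by case: (N w).
Qed.

Definition gfun (z : G) : option H :=
  match excluded_middle_informative (exists w, z = f w) with
  | left h => Some (proj1_sig (constructive_indefinite_description _ h))
  | right _ => None
  end.

Lemma g_f w : gfun (f w) = Some w.
Proof.
rewrite /gfun; case: excluded_middle_informative => [h|h].
- case: constructive_indefinite_description => w' /= E; by rewrite (Hfi E).
- exfalso; apply: h; by exists w.
Qed.

Lemma g_some z w : gfun z = Some w -> z = f w.
Proof.
rewrite /gfun; case: excluded_middle_informative => [h|h] //.
case: constructive_indefinite_description => w' /= E [<-] //.
Qed.

Lemma g_none z : gfun z = None -> forall w, z <> f w.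
Proof.
move=> Hn w E; move: Hn; by rewrite E g_f.
Qed.

Lemma g_nb z : (forall w, z <> f w) -> gfun z = None.
Proof.
move=> N; case E: (gfun z) => [w|] //; by case: (N w (g_some E)).
Qed.

Fixpoint img (l : list G) : list H :=
  match l with
  | [::] => [::]
  | z :: t => match gfun z with Some w => w :: img t | None => img t end
  end.

Lemma img_f w l : img (f w :: l) = w :: img l.
Proof. by rewrite /= g_f. Qed.

Lemma img_nb z l : (forall w, z <> f w) -> img (z :: l) = img l.
Proof. by move=> N; rewrite /= g_nb. Qed.

Lemma img_In w l : List.In w (img l) <-> List.In (f w) l.
Proof.
elim: l => [|z l IH] //=.
case E: (gfun z) => [w'|] /=.
- have Ez := g_some E; subst z; split.
  + move=> [->|/IH]; auto.
  + move=> [/Hfi ->|/IH]; auto.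
- rewrite IH; split; auto.
  move=> [Ez|] //; exfalso; exact: (g_none E Ez).
Qed.

Lemma img_app l1 l2 : img (l1 +++ l2) = img l1 +++ img l2.
Proof.
elim: l1 => [|z l IH] //=; case: (gfun z) => [w|] //=; by rewrite IH.
Qed.

Lemma img_NoDup l : List.NoDup l -> List.NoDup (img l).
Proof.
elim: l => [|z l IH] /= ND; first by constructor.
move/List.NoDup_cons_iff: ND => [Nz ND].
case E: (gfun z) => [w|]; last exact: IH.
constructor; last exact: IH.
move/img_In; rewrite -(g_some E); exact: Nz.
Qed.

Lemma MI T : forall z, chain (z :: T) -> List.NoDup (z :: T) ->
  (exists h w, z :: T = h +++ [:: f w]) ->
  (forall a, z = f a -> chain (a :: img T)) /\
  (forall u v, adj u v -> inner (f u) (f v) (R u v) z ->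
     exists b rest, img T = b :: rest /\ (b = u \/ b = v) /\ chain (img T)).
Proof.
elim: T => [|z' T IH] z Ch ND [h [w Eh]].
- have Ez : z = f w.
    case: h Eh => [|x h] /=; first by case.
    case=> _ E; exfalso; exact: (List.app_cons_not_nil h [::] (f w) E).
  split; first by move=> a _; exact: chain_single.
  move=> u v Huv Hin; exfalso; exact: (Hinb Huv Hin Ez).
- have [Hzz Ch'] := proj1 (chain_cons2 _ _ _) Ch.
  move/List.NoDup_cons_iff: ND => [Nz ND'].
  have Eh' : exists h w, z' :: T = h +++ [:: f w].
    case: h Eh => [|x h] /=; first by case=> _ E.
    case=> _ E; by exists h, w.
  have [P1 P2] := IH z' Ch' ND' Eh'.
  case: (Hcov z') => [[a' Ea']|[u' [v' [Huv' Hin']]]].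
  + subst z'; rewrite img_f.
    split.
    * move=> a Ea; subst z; apply/chain_cons2; split; last exact: P1.
      have [u [v [Huv Hp]]] := Hedge Hzz.
      have [I1 I2] := pedge_In Hp.
      apply: (adj_of Huv (branch_in Huv I1) (branch_in Huv I2)).
      move=> E; subst a'; apply: Nz; by left.
    * move=> u v Huv Hin; exists a', (img T); split => //; split; last exact: (P1 a' erefl).
      apply: (branch_in Huv); exact: (edge_class_In Hzz Huv Hin).
  + have Nb' : forall w, z' <> f w by move=> w0; exact: (Hinb Huv' Hin').
    rewrite (img_nb _ Nb'); split.
    * move=> a Ea; subst z.
      have [b [rest [Eb [Hb Chb]]]] := P2 _ _ Huv' Hin'.
      rewrite Eb; apply/chain_cons2; split; last by rewrite -Eb.
      have Ia : List.In (f a) (R u' v') by exact: (edge_class_In (adj_sym Hzz) Huv' Hin').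
      apply: (adj_of Huv' (branch_in Huv' Ia) Hb).
      move=> E; subst b; apply: Nz; right; apply/img_In; rewrite Eb; by left.
    * move=> u v Huv Hin.
      have Iz' := edge_class_In Hzz Huv Hin.
      have Hin2 : inner (f u) (f v) (R u v) z' by split => //; split; apply: Nb'.
      exact: (P2 _ _ Huv Hin2).
Qed.

Lemma FE a z T b rest : chain (f a :: z :: T) -> List.NoDup (f a :: z :: T) ->
  (exists h w, f a :: z :: T = h +++ [:: f w]) -> img (z :: T) = b :: rest ->
  exists Y, R a b = f a :: z :: Y.
Proof.
move=> Ch ND Eh Ei.
have [Hz Ch'] := proj1 (chain_cons2 _ _ _) Ch.
move/List.NoDup_cons_iff: (ND) => [Nz ND'].
have Eh' : exists h w, z :: T = h +++ [:: f w].
  case: Eh => [[|x h] [w /= E]]; first by case: E.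
  case: E => _ E; by exists h, w.
have [u [v [Huv Hp]]] := Hedge Hz.
have [I1 I2] := pedge_In Hp.
have Ha := branch_in Huv I1.
have Hb : b = u \/ b = v.
  case: (Hcov z) => [[c Ec]|[u' [v' [Huv' Hin']]]].
  - subst z; move: Ei; rewrite img_f => -[<- _]; exact: (branch_in Huv I2).
  - have Nb' : forall w, z <> f w by move=> w0; exact: (Hinb Huv' Hin').
    have Hin2 : inner (f u) (f v) (R u v) z by split => //; split; apply: Nb'.
    have [b' [rest' [E' [Hb' _]]]] := proj2 (MI Ch' ND' Eh') _ _ Huv Hin2.
    move: Ei; rewrite (img_nb _ Nb') E' => -[<- _] //.
have Nab : a <> b.
  move=> E; subst b; apply: Nz; apply/img_In; rewrite Ei; by left.
have Hab : adj a b := adj_of Huv Ha Hb Nab.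
have Hp' : pedge (R a b) (f a) z \/ pedge (R a b) z (f a).
  case: Ha Hb => E1 [E2|E2]; subst a b; try by case: Nab.
  - by left.
  - right; rewrite (Hrev Huv); exact/pedge_rev.
have [[_ [NDR _]] [/head_nth [t Et] _]] := HR Hab.
case: Hp' => /pedge_split [X [Y EX]].
- have := NoDup_split_uniq (X := [::]) (Y := t) (X' := X) (Y' := z :: Y) (a := f a).
  rewrite -Et -EX => /(_ NDR erefl) [EX0 Et'].
  exists Y; by rewrite Et Et'.
- have := NoDup_split_uniq (X := [::]) (Y := t) (X' := X +++ [:: z]) (Y' := Y) (a := f a).
  rewrite -Et -List.app_assoc -EX => /(_ NDR erefl) [EX0 _].
  exfalso; exact: (List.app_cons_not_nil X [::] z EX0).
Qed.

Lemma sameA (Y Y1 Y2 : list G) (z1 z2 : G) : Y = z1 :: Y1 -> Y = z2 :: Y2 -> z1 = z2.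
Proof. by move=> -> [->]. Qed.

Lemma sameB (X X1 X2 : list G) (z1 z2 : G) : X = X1 +++ [:: z1] -> X = X2 +++ [:: z2] -> z1 = z2.
Proof. move=> E1 E2; rewrite E1 in E2; by have [_ ->] := List.app_inj_tail _ _ _ _ E2. Qed.

Lemma fan_branch (l1 l2 : G) S : fan l1 l2 S -> l1 <> l2 -> exists w, l1 = f w.
Proof.
move=> [F1 [F2 F3]] N.
apply: NNPP => Nb.
have Nb' : forall w, l1 <> f w by move=> w E; apply: Nb; exists w.
have [u [v [Huv Hin]]] := notbranch_inner Nb'.
have [[_ [NDR _]] _] := HR Huv.
have [X [Y EXY]] := List.in_split _ _ (proj1 Hin).
have nbr : forall z, adj l1 z -> (exists Y', Y = z :: Y') \/ (exists X', X = X' +++ [:: z]).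
  move=> z Hz; case: (edge_class Hz Huv Hin) => /pedge_split [X1 [Y1 E1]].
  - left; have := NoDup_split_uniq (X:=X) (Y:=Y) (X':=X1) (Y':= z :: Y1) (a:=l1).
    rewrite -EXY -E1 => /(_ NDR erefl) [_ ->]; by exists Y1.
  - right; have := NoDup_split_uniq (X:=X) (Y:=Y) (X':=X1 +++ [:: z]) (Y':=Y1) (a:=l1).
    rewrite -EXY -List.app_assoc -E1 => /(_ NDR erefl) [-> _]; by exists X1.
have zs : forall i, exists z, pedge (S i) l1 z /\ adj l1 z.
  move=> i; have [z [t Et]] := second (F1 i) N.
  have Hp : pedge (S i) l1 z by rewrite Et; exists 0.
  exists z; split => //; have [[_ [_ Ch]] _] := F1 i; exact: Ch.
have dist : forall i j z z', i <> j -> pedge (S i) l1 z -> pedge (S j) l1 z' -> z <> z'.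
  move=> i j z z' Nij Hi Hj E; subst z'; exact: (proj1 (F2 i j Nij _ _ Hi) Hj).
have [z0 [P0 A0]] := zs 0; have [z1 [P1 A1]] := zs 1; have [z2 [P2 A2]] := zs 2.
have D01 := dist 0 1 _ _ ltac:(done) P0 P1.
have D02 := dist 0 2 _ _ ltac:(done) P0 P2.
have D12 := dist 1 2 _ _ ltac:(done) P1 P2.
case: (nbr _ A0) (nbr _ A1) (nbr _ A2) => [[Y0 E0]|[X0 E0]] [[Y1 E1]|[X1 E1]] [[Y2 E2]|[X2 E2]];
 first [ exact: (D01 (sameA E0 E1)) | exact: (D02 (sameA E0 E2)) | exact: (D12 (sameA E1 E2))
       | exact: (D01 (sameB E0 E1)) | exact: (D02 (sameB E0 E2)) | exact: (D12 (sameB E1 E2)) ].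
Qed.

Lemma fan_false (l1 l2 : G) S : Pi_graph H -> fan l1 l2 S -> l1 <> l2 -> False.
Proof.
move=> [_ PiH] Fn N.
have [u1 E1] := fan_branch Fn N.
have [u2 E2] := fan_branch (fan_rev Fn) (nesym N).
subst l1 l2.
have N12 : u1 <> u2 by move=> E; subst; apply: N.
apply: (PiH u1 u2 N12).
case: Fn => [F1 [F2 F3]].
have dec : forall i, exists z t h, S i = f u1 :: z :: t /\ S i = h +++ [:: f u2] /\
   chain (f u1 :: z :: t) /\ List.NoDup (f u1 :: z :: t).
  move=> i; have [z [t Et]] := second (F1 i) N.
  have [[_ [ND Ch]] [_ /last_nth [h Eh]]] := F1 i.
  exists z, t, h; split => //; split => //; rewrite -Et; by split.
exists (fun i => img (S i)); split; [|split].
- move=> i; have [z [t [h [Et [Eh [Ch ND]]]]]] := dec i.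
  split; [split; [|split]|split].
  + by rewrite Et img_f.
  + apply: img_NoDup; by rewrite Et.
  + rewrite Et img_f; apply: (proj1 (MI Ch ND _)) => //.
    exists h, u2; by rewrite -Et.
  + by rewrite Et img_f.
  + apply/last_nth; exists (img h); by rewrite Eh img_app /= g_f.
- move=> i j Nij EQ.
  have [zi [ti [hi [Ei [Ehi [Chi NDi]]]]]] := dec i.
  have [zj [tj [hj [Ej [Ehj [Chj NDj]]]]]] := dec j.
  have In2 : List.In u2 (img (zi :: ti)).
    apply/img_In.
    have : List.In (f u2) (S i) by rewrite Ehi; apply: List.in_or_app; right; left.
    rewrite Ei => -[E|] //; exfalso; apply: N12; exact: Hfi.
  case Ii: (img (zi :: ti)) In2 => [|b rest] // _.
  move: EQ; rewrite Ei Ej !img_f Ii => -[Ij].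
  have [Yi Ri] := FE Chi NDi (ex_intro _ hi (ex_intro _ u2 (etrans (esym Ei) Ehi))) Ii.
  have [Yj Rj] := FE Chj NDj (ex_intro _ hj (ex_intro _ u2 (etrans (esym Ej) Ehj))) (esym Ij).
  rewrite Ri in Rj; case: Rj => Ez _; subst zj.
  have Pi : pedge (S i) (f u1) zi by rewrite Ei; exists 0.
  have Pj : pedge (S j) (f u1) zi by rewrite Ej; exists 0.
  exact: (proj1 (F2 i j Nij _ _ Pi) Pj).
- move=> i j w Nij [Iw [Nw1 Nw2]] Jw.
  apply: (F3 i j (f w) Nij).
  + split; first exact/img_In.
    split => E; [apply: Nw1 | apply: Nw2]; exact: Hfi.
  + split; first exact/img_In.
    split => E; [apply: Nw1 | apply: Nw2]; exact: Hfi.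
Qed.
End Fan.

Lemma path_le_In (G : graph) (l : list G) u w : path_le l u w -> List.In u l /\ List.In w l.
Proof. move=> [i [j [_ [h1 h2]]]]; split; [exact: (List.nth_error_In _ _ h1) | exact: (List.nth_error_In _ _ h2)]. Qed.

Section Dense.
Variables (G : graph) (HG : subdivided_Pi_graph G) (x y : G) (L : G -> Prop)
  (le : G -> G -> Prop) (P : nat -> list G).
Hypothesis (GLn : grain_line x y L le P).

Lemma gl_dense : dense L le.
Proof.
case: GLn => [Nxy [Cnt [Refl [Anti [Trans [Tot [Lx [Ly [Ext [Paths [ED [GL1 [GL2 GL3]]]]]]]]]]]]].
move=> l1 l2 L1 L2 H12 N12; apply: NNPP => Nbt.
have [m1 M1] := proj1 (GL1 l1) L1.
have [m2 M2] := proj1 (GL1 l2) L2.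
pose n0 := (maxn m1 m2).+1.
have Llt1 : forall N, (n0 <= N)%N -> L_lt L P N l1.
  move=> N HN; split => //; exists m1; split; [lia | exact/M1].
have Llt2 : forall N, (n0 <= N)%N -> L_lt L P N l2.
  move=> N HN; split => //; exists m2; split; [lia | exact/M2].
have seg_ex : forall N, exists Sg, (n0 <= N)%N ->
   xy_path l1 l2 Sg /\ (forall a b, pedge Sg a b -> pedge (P N) a b) /\
   (forall v, inner l1 l2 Sg v -> path_le (P N) l1 v /\ path_le (P N) v l2).
  move=> N; case: (classic (n0 <= N)%N) => HN; last by exists [::].
  have Hpl : path_le (P N) l1 l2 by apply/(GL3 N _ _ (Llt1 N HN) (Llt2 N HN)).
  have [[NE [ND Ch]] _] := Paths N.
  have [X [Y [Z EP]]] := path_le_elim ND N12 Hpl.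
  have EP' : P N = X +++ (l1 :: Y +++ [:: l2]) +++ Z by rewrite EP /= -List.app_assoc.
  exists (l1 :: Y +++ [:: l2]) => _.
  have Hped : forall a b, pedge (l1 :: Y +++ [:: l2]) a b -> pedge (P N) a b.
    move=> a b Hab; rewrite EP'; exact: pedge_app.
  split; [|split] => //.
  - split; [split; [|split]|split].
    + by [].
    + move: ND; rewrite EP' => /List.NoDup_app_remove_l /List.NoDup_app_remove_r //.
    + move=> a b Hab; apply: Ch; exact: Hped.
    + by [].
    + apply/last_nth; by exists (l1 :: Y).
  - move=> v [Iv [Nv1 Nv2]].
    have IvY : List.In v Y.
      case: Iv => [E|Iv]; first by case: Nv1; rewrite E.
      case: (List.in_app_or _ _ _ Iv) => [//|[E|[]]]; by case: Nv2; rewrite E.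
    have [Y1 [Y2 EY]] := List.in_split _ _ IvY.
    split.
    + rewrite EP EY -List.app_assoc /=; exact: path_le_intro.
    + have -> : P N = (X +++ l1 :: Y1) +++ v :: Y2 +++ l2 :: Z
        by rewrite EP EY -!List.app_assoc.
      exact: path_le_intro.
pose Sg := fun N => proj1_sig (constructive_indefinite_description _ (seg_ex N)).
have SgP : forall N, (n0 <= N)%N -> xy_path l1 l2 (Sg N) /\ (forall a b, pedge (Sg N) a b -> pedge (P N) a b) /\
   (forall v, inner l1 l2 (Sg N) v -> path_le (P N) l1 v /\ path_le (P N) v l2).
  move=> N; rewrite /Sg; case: constructive_indefinite_description => s Hs /=; exact: Hs.
have key : forall a b v, (a < b)%N -> inner l1 l2 (Sg (n0 + a)) v -> inner l1 l2 (Sg (n0 + b)) v -> False.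
  move=> a b v Hab Ia Ib.
  have [_ [_ Ha]] := SgP (n0 + a) ltac:(lia).
  have [_ [_ Hb]] := SgP (n0 + b) ltac:(lia).
  have [Ha1 Ha2] := Ha v Ia; have [Hb1 Hb2] := Hb v Ib.
  have InA := proj2 (path_le_In Ha1).
  have InB := proj2 (path_le_In Hb1).
  case: (classic (L v)) => Lv; last first.
    apply: (GL2 _ _ InA Lv (n0 + b)) => //; lia.
  have Lltv : L_lt L P (n0 + b) v by split => //; exists (n0 + a); split => //; lia.
  have le1 : le l1 v by apply/(GL3 _ _ _ (Llt1 (n0 + b) ltac:(lia)) Lltv).
  have le2 : le v l2 by apply/(GL3 _ _ _ Lltv (Llt2 (n0 + b) ltac:(lia))).
  apply: Nbt; exists v; case: Ia => [_ [Nv1 Nv2]]; split => //; split => //; split.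
    by move=> E; apply: Nv1.
  by split.
have Fn : fan l1 l2 (fun i => Sg (n0 + i)).
  split; [|split].
  - move=> i; exact: (proj1 (SgP (n0 + i) ltac:(lia))).
  - move=> i j Nij a b Hab.
    have [_ [Hi _]] := SgP (n0 + i) ltac:(lia).
    have [_ [Hj _]] := SgP (n0 + j) ltac:(lia).
    have Nij' : n0 + i <> n0 + j by lia.
    have [K1 K2] := ED _ _ Nij' _ _ (Hi _ _ Hab).
    split => H; [apply: K1 | apply: K2]; exact: Hj.
  - move=> i j v Nij Ii Ij.
    case: (ltngtP i j) => Hij; [exact: (key i j v) | exact: (key j i v) | by case: Nij].
case: HG => [H [PiH [f [R [Hfi [HR [Hrev [Hinb [Huq [Hcov Hedge]]]]]]]]]].
exact: (fan_false Hfi HR Hrev Hinb Huq Hcov Hedge PiH Fn N12).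
Qed.
End Dense.

Lemma ev_all (T : Type) (l : list T) (Q : T -> nat -> Prop) :
  (forall t, List.In t l -> exists N0, forall N, (N0 <= N)%N -> Q t N) ->
  exists N0, forall N, (N0 <= N)%N -> forall t, List.In t l -> Q t N.
Proof.
elim: l => [|a l IH] H; first by exists 0.
have [Na Ha] := H a (or_introl erefl).
have [Nl Hl] := IH (fun t Ht => H t (or_intror Ht)).
exists (maxn Na Nl) => N HN t [<-|Ht].
- apply: Ha; lia.
- apply: Hl => //; lia.
Qed.

Lemma mono_threshold (nk : nat -> nat) : (forall k, (nk k < nk k.+1)%N) ->
  forall m0, exists m, forall n, (m0 <= nk n)%N <-> (m <= n)%N.
Proof.
move=> Hs.
have Hm : forall a b, (a <= b)%N -> (nk a <= nk b)%N.
  move=> a b /ssrnat.leP; elim => // b' _ IH; have := Hs b'; lia.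
have Hsm : forall a b, (a < b)%N -> (nk a < nk b)%N.
  move=> a b Hab; have := Hm a.+1 b Hab; have := Hs a; lia.
elim => [|m0 [m IH]]; first by exists 0.
case: (boolP (m0.+1 <= nk m)%N) => Hc.
- exists m => n; split => H.
  + case: (leqP m n) => // Hnm; have := IH n; have := Hsm _ _ Hnm; lia.
  + have := Hm _ _ H; lia.
- have Ee : nk m = m0 by have := proj2 (IH m) (leqnn m); lia.
  exists m.+1 => n; split => H.
  + case: (leqP m.+1 n) => // Hnm; have := Hm n m ltac:(lia); lia.
  + have := Hsm m n H; lia.
Qed.

Section Sub.
Variables (G : graph) (x y : G) (L : G -> Prop)
  (le : G -> G -> Prop) (P : nat -> list G).
Hypotheses (GLn : grain_line x y L le P) (Dn : dense L le).

Fixpoint flist (m : nat) : list G :=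
  match m with 0 => P 0 | S m' => P (S m') +++ flist m' end.

Lemma flist_In m v : (exists i, (i <= m)%N /\ List.In v (P i)) -> List.In v (flist m).
Proof.
elim: m => [|m IH] [i [Hi Hv]] /=.
- have E : i = 0 by lia.
  by subst i.
- apply: List.in_or_app; case: (boolP (i == m.+1)) => [/eqP Ei|Ni].
  + by left; rewrite -Ei.
  + right; apply: IH; exists i; split => //; lia.
Qed.

Definition goodN (N m : nat) :=
  forall l1 l2, L l1 -> L l2 -> (exists i, (i <= m)%N /\ List.In l1 (P i)) ->
    (exists i, (i <= m)%N /\ List.In l2 (P i)) -> le l1 l2 -> l1 <> l2 ->
    exists l, path_le (P N) l1 l /\ path_le (P N) l l2 /\
              L l /\ le l1 l /\ l1 <> l /\ le l l2 /\ l <> l2.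

Lemma goodN_ex m : exists N, (m < N)%N /\ goodN N m.
Proof.
case: GLn => [Nxy [Cnt [Refl [Anti [Trans [Tot [Lx [Ly [Ext [Paths [ED [GL1 [GL2 GL3]]]]]]]]]]]]].
have Lltm : forall v, L v -> exists N0, forall N, (N0 <= N)%N -> L_lt L P N v.
  move=> v Lv; have [mv Mv] := proj1 (GL1 v) Lv.
  exists mv.+1 => N HN; split => //; exists mv; split; [lia | exact/Mv].
have H1 : forall l1, List.In l1 (flist m) -> exists N0, forall N, (N0 <= N)%N ->
   forall l2, List.In l2 (flist m) -> L l1 -> L l2 -> le l1 l2 -> l1 <> l2 ->
    exists l, path_le (P N) l1 l /\ path_le (P N) l l2 /\
              L l /\ le l1 l /\ l1 <> l /\ le l l2 /\ l <> l2.
  move=> l1 _.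
  apply: ev_all => l2 _.
  case: (classic (L l1 /\ L l2 /\ le l1 l2 /\ l1 <> l2)) => [[L1 [L2 [H12 N12]]]|Nc]; last first.
    exists 0 => N _ L1 L2 H12 N12; exfalso; by apply: Nc.
  have [c [Lc [Hc1 [Hc2 [Hc3 Hc4]]]]] := Dn L1 L2 H12 N12.
  have [Na Ha] := Lltm _ L1; have [Nb Hb] := Lltm _ L2; have [Nc Hc] := Lltm _ Lc.
  exists (maxn Na (maxn Nb Nc)) => N HN _ _ _ _.
  have A1 := Ha N ltac:(lia); have A2 := Hb N ltac:(lia); have A3 := Hc N ltac:(lia).
  exists c; split; first exact/(GL3 _ _ _ A1 A3).
  split; first exact/(GL3 _ _ _ A3 A2).
  by repeat split.
have [N0 HN0] := ev_all H1.
exists (maxn N0 m.+1); split; first lia.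
move=> l1 l2 L1 L2 I1 I2 H12 N12.
apply: (HN0 (maxn N0 m.+1) ltac:(lia) l1 (flist_In I1) l2 (flist_In I2)) => //.
Qed.

Definition hN (m : nat) : nat := proj1_sig (constructive_indefinite_description _ (goodN_ex m)).

Lemma hN_spec m : (m < hN m)%N /\ goodN (hN m) m.
Proof. rewrite /hN; by case: constructive_indefinite_description. Qed.

Fixpoint nk (k : nat) : nat := match k with 0 => 0 | S k' => hN (nk k') end.

Lemma nk_S k : (nk k < nk k.+1)%N.
Proof. exact: (proj1 (hN_spec (nk k))). Qed.

Lemma nk_mono a b : (a <= b)%N -> (nk a <= nk b)%N.
Proof. move=> /ssrnat.leP; elim => // b' _ IH; have := nk_S b'; lia. Qed.

Lemma nk_smono a b : (a < b)%N -> (nk a < nk b)%N.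
Proof. move=> Hab; have := nk_mono Hab; have := nk_S a; lia. Qed.

Lemma nk_inj a b : a <> b -> nk a <> nk b.
Proof.
move=> N; case: (ltngtP a b) => H; [have := nk_smono H | have := nk_smono H | by case: N]; lia.
Qed.

Lemma sub_grain : grain_line x y L le (fun k => P (nk k)).
Proof.
have GL := GLn.
case: GL => [Nxy [Cnt [Refl [Anti [Trans [Tot [Lx [Ly [Ext [Paths [ED [GL1 [GL2 GL3]]]]]]]]]]]]].
do 9 (split => //).
split; first by move=> n; exact: Paths.
split; first by move=> n m Nnm; apply: ED; exact: nk_inj.
split; [|split].
- move=> v; split.
  + move=> Lv; have [m0 M0] := proj1 (GL1 v) Lv.
    have [m Hm] := mono_threshold nk_S m0.
    exists m => n; rewrite -Hm; exact: M0.
  + move=> [m Hm]; apply: NNPP => Lv.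
    apply: (GL2 (nk m) v (proj2 (Hm m) (leqnn m)) Lv (nk m.+1)).
    * have := nk_S m; lia.
    * apply/Hm; lia.
- move=> n v Hv Lv m Nmn; apply: (GL2 _ _ Hv Lv); exact: nk_inj.
- move=> n u w [Lu [k [Hk Iu]]] [Lw [k' [Hk' Iw]]].
  apply: GL3.
  + split => //; exists (nk k); split => //; exact: nk_smono.
  + split => //; exists (nk k'); split => //; exact: nk_smono.
Qed.

Lemma sub_wild : wildly_presented L le (fun k => P (nk k)).
Proof.
move=> [|n] l1 l2 [L1 [k [Hk I1]]] [L2 [k' [Hk' I2]]] H12 N12 //.
have [_ Hg] := hN_spec (nk n).
apply: Hg => //.
- exists (nk k); split => //; apply: nk_mono; lia.
- exists (nk k'); split => //; apply: nk_mono; lia.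
Qed.
End Sub.

Lemma rat_linord : linord (fun q : rat => (0 <= q)%R /\ (q <= 1)%R) (fun a b => (a <= b)%R).
Proof.
split; [|split; [|split]].
- move=> u _; exact: lexx.
- move=> u v _ _ h1 h2; apply/le_anti; by rewrite h1 h2.
- move=> u v w _ _ _; exact: le_trans.
- move=> u v _ _; case/orP: (le_total u v); auto.
Qed.

Lemma rat_dense : dense (fun q : rat => (0 <= q)%R /\ (q <= 1)%R) (fun a b => (a <= b)%R).
Proof.
move=> a b [a0 a1] [b0 b1] hab nab.
have lt : (a < b)%R by rewrite lt_neqAle hab andbT; apply/eqP.
have [m1 m2] := midf_lt lt.
exists ((a + b) / 2)%R; split.
- split; [exact: (le_trans a0 (ltW m1)) | exact: (le_trans (ltW m2) b1)].
- split; first exact: (ltW m1).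
  split; first by move=> E; rewrite -E ltxx in m1.
  split; first exact: (ltW m2).
  by move=> E; rewrite E ltxx in m2.
Qed.

Lemma gl_wild (G : graph) (x y : G) L le P : grain_line x y L le P -> dense L le -> wild L le.
Proof.
move=> GLn Dn.
case: GLn => [Nxy [[g Hg] [Refl [Anti [Trans [Tot [Lx [Ly [Ext _]]]]]]]]].
have linA : linord L le by split; [|split; [|split]].
have [f [Hf1 [Hf2 Hf3]]] := cantor_iso linA rat_linord Dn rat_dense Lx Ly
   (xb := 0%R) (yb := 1%R) ltac:(split; [exact: lexx | exact: ler01])
   ltac:(split; [exact: ler01 | exact: lexx]) Ext
   (fun b (Hb : (0 <= b)%R /\ (b <= 1)%R) => Hb) Nxy ltac:(by []) Hg
   (fun u v _ _ E => pcan_inj (@pickleK rat) E).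
exists f; split; [|split] => //.
move=> q h0 h1; exact: Hf2.
Qed.

Theorem lemma5p5 (G : graph) (HG : subdivided_Pi_graph G)
  (x y : G) (L : G -> Prop) (le : G -> G -> Prop) (P : nat -> list G) :
  grain_line x y L le P ->
  wild L le /\
  exists nk : nat -> nat, (forall k, (nk k < nk k.+1)%N) /\
    grain_line x y L le (fun k => P (nk k)) /\
    wildly_presented L le (fun k => P (nk k)).
Proof.
move=> GLn.
have Dn := gl_dense HG GLn.
split; first exact: gl_wild GLn Dn.
exists (nk GLn Dn); split; first exact: nk_S.
split; [exact: sub_grain | exact: sub_wild].
Qed.
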